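(* Let $n\ge2$ and let $A=(a_{ij})\in\mathbb{R}^{n\times n}$ be pseudo-diagonalizable. (1) If $n=2$, then $A$ is separable if and only if $a_{11}+a_{22}=0$. (2) If $n\ge3$, then $A$ is separable if and only if $a_{ii}=0$ for all $i\in[n]$. (3) $A$ is an optimal-node matrix if and only if there exists $k\in[n]$ such that $a_{kk}\ge0$ and $a_{ii}\le0$ for all $i\in[n]$ with $i\ne k$.
   Context: Max-plus conventions: $\varepsilon=-\infty$, $\oplus=\max$, $\otimes=+$, $(A\otimes B)_{ij}=\max_t(A_{it}+B_{tj})$. A matrix $P\in\overline{\mathbb{R}}^{n\times n}$ is invertible iff it has exactly one real entry in each row and column (others $\varepsilon$); $A,B$ are similar if $B=P^{-1}\otimes A\otimes P$ for invertible $P$. A square matrix is pseudo-diagonal if its diagonal entries are real and off-diagonal entries equal the real number $0$; pseudo-diagonalizable means similar to a pseudo-diagonal matrix. A finite matrix $A=(a_{ij})$ is separable if there are reals $u_i,v_j$ with $a_{ij}=u_i+v_j$ for all $i,j$; it is an optimal-node matrix if there is $k\in[n]$ with $a_{ik}+a_{kj}\ge a_{il}+a_{lj}$ for all $i,j,l\in[n]$. *)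

(* Defs.v *)
(* Max-plus semiring Rbar_max = R ∪ {ε}, encoded as option R
   with None = ε = -oo. *)
From HB Require Import structures.
From mathcomp Require Import all_boot all_order all_algebra.
From mathcomp Require Import reals.
Set Implicit Arguments. Unset Strict Implicit. Unset Printing Implicit Defensive.
Import Order.TTheory GRing.Theory Num.Theory.
Local Open Scope ring_scope.

Section MaxPlus.
Variable R : realType.

Definition mp_add (x y : option R) : option R :=
  match x, y with
  | None, _ => y
  | _, None => x
  | Some a, Some b => Some (Num.max a b)
  end.

Definition mp_mul (x y : option R) : option R :=
  match x, y with
  | Some a, Some b => Some (a + b)
  | _, _ => None
  end.

Definition mp_mxmul (m n p : nat) (A : 'M[option R]_(m, n)) (B : 'M[option R]_(n, p))
  : 'M[option R]_(m, p) :=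
  \matrix_(i, j) \big[mp_add/None]_(t < n) mp_mul (A i t) (B t j).

Definition mp_id (n : nat) : 'M[option R]_n :=
  \matrix_(i, j) if i == j then Some 0 else None.

Definition mp_inverse (n : nat) (P Q : 'M[option R]_n) : Prop :=
  mp_mxmul P Q = mp_id n /\ mp_mxmul Q P = mp_id n.

Definition mp_similar (n : nat) (A B : 'M[option R]_n) : Prop :=
  exists P Q : 'M[option R]_n,
    mp_inverse P Q /\ B = mp_mxmul (mp_mxmul Q A) P.

Definition pseudo_diagonal (n : nat) (D : 'M[option R]_n) : Prop :=
  (forall i, exists d : R, D i i = Some d) /\
  (forall i j, i != j -> D i j = Some 0).

Definition pseudo_diagonalizable (n : nat) (A : 'M[option R]_n) : Prop :=
  exists D, pseudo_diagonal D /\ mp_similar A D.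

Definition fin_mx (n : nat) (A : 'M[R]_n) : 'M[option R]_n := map_mx Some A.

Definition separable (n : nat) (A : 'M[R]_n) : Prop :=
  exists u v : 'I_n -> R, forall i j, A i j = u i + v j.

Definition optimal_node (n : nat) (A : 'M[R]_n) : Prop :=
  exists k : 'I_n, forall i j l : 'I_n, A i l + A l j <= A i k + A k j.

End MaxPlus.

(* Main.v *)
Require Import Defs.
From HB Require Import structures.
From mathcomp Require Import all_boot all_order all_algebra.
From mathcomp Require Import reals.
From mathcomp Require Import lra.
Import Order.TTheory GRing.Theory Num.Theory.
Local Open Scope ring_scope.

Section S.
Variable R : realType.

Lemma mp_addA : associative (@mp_add R).
Proof. by case=> [a|] [b|] [c|] //=; rewrite maxA. Qed.
Lemma mp_addC : commutative (@mp_add R).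
Proof. by case=> [a|] [b|] //=; rewrite maxC. Qed.
Lemma mp_add0 : left_id None (@mp_add R).
Proof. by case. Qed.

HB.instance Definition _ := Monoid.isComLaw.Build (option R) None (@mp_add R) mp_addA mp_addC mp_add0.

Lemma mp_add_none (x y : option R) : mp_add x y = None -> x = None.
Proof. by case: x; case: y. Qed.
Lemma mp_addx0 (x : option R) : mp_add x None = x.
Proof. by case: x. Qed.

Variable n : nat.

Lemma big_mp_none (F : 'I_n -> option R) :
  \big[@mp_add R/None]_(t < n) F t = None -> forall t, F t = None.
Proof. by move=> H t; move: H; rewrite (bigD1 t) //= => /mp_add_none. Qed.

Lemma big_mp_one (F : 'I_n -> option R) t0 :
  (forall t, t != t0 -> F t = None) -> \big[@mp_add R/None]_(t < n) F t = F t0.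
Proof.
move=> H; rewrite (bigD1 t0) //= big1 ?mp_addx0 // => t /H //.
Qed.

Lemma big_mp_some (F : 'I_n -> option R) :
  \big[@mp_add R/None]_(t < n) F t <> None -> exists t, F t <> None.
Proof.
move=> H; case: (pickP (fun t => F t != None)) => [t /eqP Ht|H2]; first by exists t.
by case: H; apply: big1 => t _; move/negbFE/eqP: (H2 t).
Qed.

Lemma mp_mulx0 (x : option R) : mp_mul x None = None.
Proof. by case: x. Qed.
Lemma mp_mul_none_l (a : R) y : mp_mul (Some a) y = None -> y = None.
Proof. by case: y. Qed.
Lemma mp_mul_none_r (a : R) y : mp_mul y (Some a) = None -> y = None.
Proof. by case: y. Qed.

Lemma pd_struct (A : 'M[R]_n) : pseudo_diagonalizable (fin_mx A) ->
  exists x : 'I_n -> R, forall i j, i != j -> A i j = x i - x j.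
Proof.
case=> D [[_ Doff] [P [Q [[HPQ HQP] DE]]]]; subst D.
have eQP i j : \big[@mp_add R/None]_(t < n) mp_mul (Q i t) (P t j)
    = if i == j then Some 0 else None.
  by have := congr1 (fun M : 'M_n => M i j) HQP; rewrite !mxE.
have ePQ i j : \big[@mp_add R/None]_(t < n) mp_mul (P i t) (Q t j)
    = if i == j then Some 0 else None.
  by have := congr1 (fun M : 'M_n => M i j) HPQ; rewrite !mxE.
have ex i : exists t, Q i t <> None /\ P t i <> None.
  have := eQP i i; rewrite eqxx => E.
  have [t Ht] : exists t, mp_mul (Q i t) (P t i) <> None.
    by apply: big_mp_some; rewrite E.
  by exists t; case: (Q i t) Ht; case: (P t i).
have [tau Htau] := fin_all_exists ex.
have S2 i j : j != i -> P (tau i) j = None.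
  move=> ji; have := eQP i j; rewrite eq_sym (negbTE ji) => /big_mp_none/(_ (tau i)).
  by case: (Q i (tau i)) (Htau i).1 => // a _ /mp_mul_none_l.
have tinj : injective tau.
  move=> i i' E; apply/eqP; apply/negPn/negP => ne.
  by apply: (Htau i).2; rewrite E S2 // eq_sym.
have S4 i s : s != tau i -> Q i s = None.
  move=> si; have := ePQ (tau i) s; rewrite eq_sym (negbTE si) => /big_mp_none/(_ i).
  by case: (P (tau i) i) (Htau i).2 => // a _ /mp_mul_none_l.
have S5 s j : s != tau j -> P s j = None.
  move=> sj; rewrite -(f_invF tinj s) S2 //; apply: contra sj => /eqP ->.
  by rewrite f_invF.
pose p i := odflt 0 (P (tau i) i).
pose q i := odflt 0 (Q i (tau i)).
have Pp i : P (tau i) i = Some (p i) by rewrite /p; case: (P (tau i) i) (Htau i).2.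
have Qq i : Q i (tau i) = Some (q i) by rewrite /q; case: (Q i (tau i)) (Htau i).1.
have pq i : q i + p i = 0.
  have := eQP i i; rewrite eqxx (@big_mp_one _ (tau i)).
    by rewrite Pp Qq => -[].
  by move=> t ti; rewrite S4.
have Dij i j : i != j -> A (tau i) (tau j) = p i - p j.
  move=> ij; have := Doff i j ij; rewrite !mxE (@big_mp_one _ (tau j)); last first.
    by move=> s sj; rewrite S5 // mp_mulx0.
  rewrite Pp mxE (@big_mp_one _ (tau i)); last by move=> t ti; rewrite S4.
  rewrite Qq mxE /= => -[E].
  have := pq i; lra.
exists (fun a => p (invF tinj a)) => a b ab.
rewrite -{1}(f_invF tinj a) -{1}(f_invF tinj b) Dij //.
by apply: contra ab => /eqP E; rewrite -(f_invF tinj a) E f_invF.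
Qed.
End S.

Theorem theorem4p19 (R : realType) (m : nat) (A : 'M[R]_m.+2) :
  pseudo_diagonalizable (fin_mx A) ->
  (m = 0%N ->
     (separable A <-> A ord0 ord0 + A (inord 1) (inord 1) = 0)) /\
  ((1 <= m)%N ->
     (separable A <-> forall i, A i i = 0)) /\
  (optimal_node A <->
     exists k : 'I_m.+2, 0 <= A k k /\ (forall i, i != k -> A i i <= 0)).
Proof.
move=> /pd_struct [x Hx].
have [d dE] : exists d : 'I_m.+2 -> R, forall i, A i i = d i by exists (fun i => A i i).
have Ae i j : A i j = x i - x j + (if i == j then d i else 0).
  case: eqVneq => [->|ij]; first by rewrite dE; lra.
  by rewrite Hx //; lra.
have ne01 : (inord 1 : 'I_m.+2) != ord0.
  by rewrite -val_eqE /= inordK.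
split; [|split].
- move=> m0; subst m.
  have two (i : 'I_2) : i = ord0 \/ i = inord 1.
    case: i => [[|[|k]] Hk]; [left|right|by []]; apply/val_inj => //=.
    by rewrite inordK.
  have e10 : (inord 1 == ord0 :> 'I_2) = false by apply/negbTE.
  have e01 : (ord0 == inord 1 :> 'I_2) = false by rewrite eq_sym e10.
  rewrite !dE; split.
    case=> u [v Huv]; have := Huv ord0 ord0; have := Huv (inord 1) (inord 1).
    have := Huv ord0 (inord 1); have := Huv (inord 1) ord0.
    rewrite !Ae !eqxx e10 e01; lra.
  move=> Hc; exists (fun i => x i + (if i == ord0 then d ord0 else 0)).
  exists (fun j => - x j + (if j == ord0 then 0 else - d ord0)) => i j.
  rewrite Ae.
  case: (two i) => ->; case: (two j) => ->;
    rewrite ?eqxx ?e10 ?e01 /=; lra.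
- move=> m1.
  have ne02 : (inord 2 : 'I_m.+2) != ord0.
    by rewrite -val_eqE /= inordK.
  have ne12 : (inord 2 : 'I_m.+2) != inord 1.
    by rewrite -val_eqE /= !inordK.
  split.
    case=> u [v Huv] i.
    have [j [k [ij ik jk]]] : exists j k, [/\ i != j, i != k & j != k].
      case: (eqVneq i ord0) => [->|i0].
        by exists (inord 1), (inord 2); split; rewrite // eq_sym.
      case: (eqVneq i (inord 1)) => [->|i1].
        by exists ord0, (inord 2); split; rewrite // eq_sym.
      by exists ord0, (inord 1); split; rewrite // eq_sym.
    have := Huv i i; have := Huv j k; have := Huv i k; have := Huv j i.
    rewrite !Ae eqxx (negbTE jk) (negbTE ik) (eq_sym j i) (negbTE ij); lra.
  move=> H0; exists x, (fun j => - x j) => i j; rewrite Ae.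
  by case: (eqVneq i j) => [->|_]; rewrite -?dE ?H0; lra.
- have exl : forall k : 'I_m.+2, exists l, l != k.
    move=> k; case: (eqVneq k ord0) => [->|k0]; first by exists (inord 1).
    by exists ord0; rewrite eq_sym.
  split.
    case=> k Hk; exists k; split.
      have [l lk] := exl k; have := Hk k k l.
      rewrite !Ae eqxx (negbTE lk) (eq_sym k l) (negbTE lk); lra.
    move=> i ik; have := Hk i i i.
    rewrite !Ae eqxx (negbTE ik) (eq_sym k i) (negbTE ik); lra.
  case=> k [dk Hd]; exists k => i j l; rewrite !Ae.
  have h1 : 0 <= (if i == k then d i else 0).
    by case: (eqVneq i k) => [->|_]; rewrite -?dE.
  have h2 : 0 <= (if k == j then d k else 0).
    by case: (eqVneq k j) => [_|_]; rewrite -?dE.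
  case: (eqVneq l k) => [->|lk]; first lra.
  have h3 : (if i == l then d i else 0) <= 0.
    by case: (eqVneq i l) => [->|_]; rewrite -?dE ?Hd.
  have h4 : (if l == j then d l else 0) <= 0.
    by case: (eqVneq l j) => [_|_]; rewrite -?dE ?Hd.
  lra.
Qed.
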